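(* For integers $j,r$ with $2\le j\le n-1$ and $0\le r\le j-2$, let $\pi_{j,r}=s_j\cdot s_{j-1}\cdots s_{j-r}$. Then $w_j\cdot\pi_{j,r}=\pi_{j,r}\cdot w_{j-r-1}$ and $\ell(w_j\cdot\pi_{j,r})=\ell(\pi_{j,r})+2(j-r-1)$.
   Context: $D_n$ ($n\ge2$) is the Coxeter group with generators $s_{1'},s_1,\dots,s_{n-1}$ and relations $s^2=1$, $(s_i s_{i+1})^3=1$, $(s_is_j)^2=1$ for $|i-j|\ge 2$, $(s_{1'}s_2)^3=1$, $(s_{1'}s_i)^2=1$ for $i\ne 2$. $w_k=s_k s_{k-1}\cdots s_2 s_1 s_{1'} s_2\cdots s_k$ for $1\le k\le n-1$; $\ell$ is Coxeter length with respect to $\{s_{1'},s_1,\dots,s_{n-1}\}$. *)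

(* Defs.v *)
From mathcomp Require Import all_boot.
From Stdlib Require Import Relation_Operators ClassicalEpsilon.
Set Implicit Arguments. Unset Strict Implicit. Unset Printing Implicit Defensive.

(* Generators of D_n are indexed by 'I_n:
   index 0 stands for s_{1'}, index i (1 <= i <= n-1) stands for s_i.
   Elements of D_n are represented by words (seq 'I_n) modulo the
   congruence generated by the Coxeter relations. *)

Definition coxm (n : nat) (a b : 'I_n) : nat :=
  if a == b then 1
  else if (val a == 0) || (val b == 0) then
         (if val a + val b == 2 then 3 else 2)   (* (s_1' s_2)^3, (s_1' s_i)^2 *)
       else if (val a).+1 == val b then 3
       else if (val b).+1 == val a then 3
       else 2.

Definition relator (n : nat) (a b : 'I_n) : seq 'I_n :=
  flatten (nseq (coxm a b) [:: a; b]).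

Inductive rel_step (n : nat) : seq 'I_n -> seq 'I_n -> Prop :=
| RelIns (u v : seq 'I_n) (a b : 'I_n) : rel_step (u ++ v) (u ++ relator a b ++ v).

Definition weq (n : nat) : seq 'I_n -> seq 'I_n -> Prop :=
  clos_refl_sym_trans (seq 'I_n) (@rel_step n).

Definition has_word_of_size (n : nat) (w : seq 'I_n) (k : nat) : bool :=
  if excluded_middle_informative (exists w' : seq 'I_n, size w' = k /\ weq w w')
  then true else false.

Lemma has_word_of_size_ex (n : nat) (w : seq 'I_n) : exists k, has_word_of_size w k.
Proof.
exists (size w); rewrite /has_word_of_size.
case: excluded_middle_informative => // [[]].
by exists w; split => //; apply: rst_refl.
Qed.

Definition coxlen (n : nat) (w : seq 'I_n) : nat := ex_minn (has_word_of_size_ex w).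

Definition gen (n : nat) (k : nat) : seq 'I_n :=
  if insub k is Some i then [:: i] else [::].

Definition word_of (n : nat) (ks : seq nat) : seq 'I_n := flatten (map (@gen n) ks).

(* w_k = s_k s_{k-1} ... s_2 s_1 s_{1'} s_2 ... s_k *)
Definition w_word (n k : nat) : seq 'I_n :=
  word_of n (rev (iota 1 k) ++ [:: 0] ++ iota 2 k.-1).

Definition pi_word (n j r : nat) : seq 'I_n :=
  word_of n (rev (iota (j - r) r.+1)).

(* Main.v *)
Require Import Defs.
From Stdlib Require Import ZArith Lia Relation_Operators ClassicalEpsilon.
From mathcomp Require Import all_boot.
From mathcomp Require Import zify ssrZ.
Set Implicit Arguments. Unset Strict Implicit. Unset Printing Implicit Defensive.
Set Warnings "-notation-overridden".

Local Open Scope Z_scope.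

Definition sig0 (y : Z) : Z :=
  if y =? 1 then -2 else if y =? -2 then 1 else if y =? 2 then -1 else if y =? -1 then 2 else y.
Definition sigp (a y : Z) : Z :=
  if y =? a then a+1 else if y =? a+1 then a else if y =? -a then -a-1 else if y =? -a-1 then -a else y.
Definition sigma (i : nat) : Z -> Z := if i is O then sig0 else sigp (Z.of_nat i).

Lemma sig0_spec y :
  (y = 1 /\ sig0 y = -2) \/ (y = -2 /\ sig0 y = 1) \/ (y = 2 /\ sig0 y = -1) \/ (y = -1 /\ sig0 y = 2)
  \/ (y <> 1 /\ y <> -2 /\ y <> 2 /\ y <> -1 /\ sig0 y = y).
Proof.
rewrite /sig0; case: (Z.eqb_spec y 1); [lia|]; case: (Z.eqb_spec y (-2)); [lia|];
case: (Z.eqb_spec y 2); [lia|]; case: (Z.eqb_spec y (-1)); lia.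
Qed.

Lemma sigp_spec a y :
  (y = a /\ sigp a y = a+1) \/ (y = a+1 /\ sigp a y = a) \/ (y = -a /\ sigp a y = -a-1) \/ (y = -a-1 /\ sigp a y = -a)
  \/ (y <> a /\ y <> a+1 /\ y <> -a /\ y <> -a-1 /\ sigp a y = y).
Proof.
rewrite /sigp; case: (Z.eqb_spec y a); [lia|]; case: (Z.eqb_spec y (a+1)); [lia|];
case: (Z.eqb_spec y (-a)); [lia|]; case: (Z.eqb_spec y (-a-1)); lia.
Qed.

Ltac sstep := match goal with
  | |- context [sigp ?A ?y] =>
     lazymatch y with context [sigp _ _] => fail | context [sig0 _] => fail | _ =>
     let H := fresh in
     destruct (sigp_spec A y) as [[? H]|[[? H]|[[? H]|[[? H]|[? [? [? [? H]]]]]]]]; rewrite H; clear H end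
  | |- context [sig0 ?y] =>
     lazymatch y with context [sigp _ _] => fail | context [sig0 _] => fail | _ =>
     let H := fresh in
     destruct (sig0_spec y) as [[? H]|[[? H]|[[? H]|[[? H]|[? [? [? [? H]]]]]]]]; rewrite H; clear H end
  end.
Ltac ssolve := repeat (sstep; try lia); lia.

Definition eval (n : nat) (w : seq 'I_n) (y : Z) : Z := foldl (fun z (a : 'I_n) => sigma a z) y w.

Lemma eval_cat n (u v : seq 'I_n) y : eval (u ++ v) y = eval v (eval u y).
Proof. by rewrite /eval foldl_cat. Qed.

Lemma sigmaK i y : sigma i (sigma i y) = y.
Proof. case: i => [|i] /=; ssolve. Qed.

Lemma sigmaN i y : sigma i (- y) = - sigma i y.
Proof. case: i => [|i] /=; ssolve. Qed.

Lemma rel_nat (ia ib : nat) y : ia <> ib ->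
  ssrnat.iter (if (ia == 0%nat) || (ib == 0%nat) then (if (ia + ib == 2)%nat then 3%nat else 2%nat)
    else if ia.+1 == ib then 3%nat else if ib.+1 == ia then 3%nat else 2%nat)
    (fun z => sigma ib (sigma ia z)) y = y.
Proof.
move=> ne.
case: (eqVneq ia 0%nat) => [e|na] /=; [subst ia|].
  case: (eqVneq ib 2%nat) => [->|nb] /=; first by ssolve.
  have hb : (0 < ib)%nat by lia.
  rewrite /sigma; case: ib ne nb hb => [|ib] // ne nb hb.
  have : Z.of_nat ib.+1 <> 2 by lia. move=> ?; cbn [ssrnat.iter]; ssolve.
case: (eqVneq ib 0%nat) => [e|nb] /=; [subst ib|].
  case: (eqVneq ia 2%nat) => [->|na2] /=; first by ssolve.
  rewrite /sigma; case: ia ne na na2 => [|ia] // ne na na2.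
  have : Z.of_nat ia.+1 <> 2 by lia. rewrite addn0 (negbTE na2) => ?; cbn [ssrnat.iter]; ssolve.
rewrite /sigma; case: ia ne na => [|ia] // ne na; case: ib ne nb => [|ib] // ne nb.
case: (eqVneq ia.+2 ib.+1) => [e|n1] /=.
  have : Z.of_nat ib.+1 = Z.of_nat ia.+1 + 1 by lia. move=> ?; cbn [ssrnat.iter]; ssolve.
case: (eqVneq ib.+2 ia.+1) => [e|n2] /=.
  have : Z.of_nat ia.+1 = Z.of_nat ib.+1 + 1 by lia. move=> ?; cbn [ssrnat.iter]; ssolve.
have : Z.of_nat ia.+1 <> Z.of_nat ib.+1 + 1 /\ Z.of_nat ib.+1 <> Z.of_nat ia.+1 + 1 /\ Z.of_nat ia.+1 <> Z.of_nat ib.+1 by lia.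
move=> ?; cbn [ssrnat.iter]; ssolve.
Qed.

Lemma eval_rel n (a b : 'I_n) y : eval (relator a b) y = y.
Proof.
rewrite /relator.
pose f := fun z => sigma b (sigma a z).
have iS : forall (m : nat) z, ssrnat.iter m f (f z) = f (ssrnat.iter m f z).
  by elim=> //= m IH z; rewrite IH.
have -> : forall (m : nat) y, eval (flatten (nseq m [:: a; b])) y = ssrnat.iter m f y.
  elim=> [|m IH] z //=; by rewrite IH iS.
rewrite /f; clear iS f; rewrite /coxm; case: (eqVneq a b) => [->|ne] /=; first by rewrite sigmaK.
apply: rel_nat => /val_inj; apply/eqP; done.
Qed.

Local Close Scope Z_scope.

Local Open Scope Z_scope.

Definition L (n : nat) : seq Z :=
  [seq Z.of_nat k | k <- iota 1 n] ++ [seq - Z.of_nat k | k <- iota 1 n].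

Lemma memL n y : y \in L n <-> 1 <= Z.abs y <= Z.of_nat n.
Proof.
split.
  rewrite mem_cat => /orP [] /mapP [k]; rewrite mem_iota => Hk ->; lia.
move=> Hy; rewrite mem_cat; apply/orP.
case: (Z.leb_spec 0 y) => Hy0.
  left; apply/mapP; exists (Z.to_nat y); last lia.
  rewrite mem_iota; lia.
right; apply/mapP; exists (Z.to_nat (- y)); last lia.
rewrite mem_iota; lia.
Qed.

Lemma uniqL n : uniq (L n).
Proof.
rewrite cat_uniq !map_inj_uniq ?iota_uniq //=; try (move=> ? ? ?; lia).
rewrite andbT; apply/hasPn => y /mapP [k]; rewrite mem_iota => Hk ->.
apply/negP => /mapP [k']; rewrite mem_iota => Hk' e; lia.
Qed.

Definition PL n : seq (Z * Z) := [seq (a, b) | a <- L n, b <- L n].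

Lemma memPL n p : p \in PL n = (p.1 \in L n) && (p.2 \in L n).
Proof.
apply/allpairsP/andP => [[q [h1 h2 ->]] //|[h1 h2]]; exists p; case: p h1 h2 => //.
Qed.

Lemma uniqPL n : uniq (PL n).
Proof. apply: allpairs_uniq; try apply: uniqL. by move=> [? ?] [? ?] _ _ /= ->. Qed.

Definition Pr (x : Z -> Z) (p : Z * Z) : bool :=
  (p.1 <? p.2) && ~~ (p.1 =? - p.2) && ~~ (p.1 =? 0) && ~~ (p.2 =? 0) && (x p.2 <? x p.1).

Definition F n (x : Z -> Z) : nat := count (Pr x) (PL n).

Lemma sigmaL n (i : nat) y : (2 <= n)%nat -> (i < n)%nat -> (sigma i y \in L n) = (y \in L n).
Proof.
move=> hn hi; apply/idP/idP => /memL H; apply/memL; move: H; case: i hi => [|i] hi; rewrite /sigma;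
 [ ssolve | have : Z.of_nat i.+1 + 1 <= Z.of_nat n by lia | ssolve | have : Z.of_nat i.+1 + 1 <= Z.of_nat n by lia].
all: move=> ?; ssolve.
Qed.

Lemma count_two (T : eqType) (s : seq T) (P : pred T) p1 p2 :
  uniq s -> (forall p, P p -> p = p1 \/ p = p2) -> (count P s <= 2)%nat.
Proof.
move=> us H.
apply: (@leq_trans (count (predU (pred1 p1) (pred1 p2)) s)).
  apply: sub_count => p /H [->|->] /=; rewrite eqxx ?orbT //.
rewrite -[X in (_ <= X)%nat]/(1 + 1)%nat.
apply: (@leq_trans (count (pred1 p1) s + count (pred1 p2) s)).
  by rewrite -count_predUI leq_addr.
by apply: leq_add; rewrite count_uniq_mem // leq_b1.
Qed.

Lemma Rsupp (i : nat) a b :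
  b < a -> sigma i a < sigma i b -> a <> - b ->
  exists p1 p2 : Z * Z, forall c d, (c, d) = (a, b) -> (c, d) = p1 \/ (c, d) = p2.
Abort.

Definition Rp (i : nat) (p : Z * Z) := (p.2 <? p.1) && (sigma i p.1 <? sigma i p.2) && ~~ (p.1 =? - p.2)
  && ~~ (p.1 =? 0) && ~~ (p.2 =? 0).

Definition p1 (i : nat) : Z * Z := if i is O then (1, -2) else (Z.of_nat i + 1, Z.of_nat i).
Definition p2 (i : nat) : Z * Z := if i is O then (2, -1) else (- Z.of_nat i, - Z.of_nat i - 1).

Lemma Rsupp i p : Rp i p -> p = p1 i \/ p = p2 i.
Proof.
case: p => a b; rewrite /Rp /=.
case: (Z.ltb_spec b a) => // h1; case: (Z.ltb_spec (sigma i a) (sigma i b)) => // h2;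
case: (Z.eqb_spec a (-b)) => // h3; case: (Z.eqb_spec a 0) => // h4; case: (Z.eqb_spec b 0) => // h5 _.
suff : (a = (p1 i).1 /\ b = (p1 i).2) \/ (a = (p2 i).1 /\ b = (p2 i).2).
  by case: (p1 i) (p2 i) => ? ? [? ?] /= [[-> ->]|[-> ->]]; [left|right].
move: h2; case: i => [|i]; cbn [p1 p2 sigma fst snd]; ssolve.
Qed.

Lemma sigma00 i : sigma i 0 = 0.
Proof. case: i => [|i]; cbn [sigma]; ssolve. Qed.

Lemma step n (i : nat) (x : Z -> Z) : (2 <= n)%nat -> (i < n)%nat ->
  (F n (fun y => x (sigma i y)) <= F n x + 2)%nat.
Proof.
move=> hn hi.
set s := sigma i.
pose g (p : Z * Z) := (s p.1, s p.2).
have gK : involutive g by case=> a b; rewrite /g /s /= !sigmaK.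
have pL : perm_eq (map s (L n)) (L n).
  apply: uniq_perm; first by rewrite map_inj_uniq ?uniqL //; apply: (can_inj (@sigmaK i)).
    exact: uniqL.
  move=> y; apply/mapP/idP => [[z hz ->]|hy]; first by rewrite /s sigmaL.
  by exists (s y); rewrite /s ?sigmaK // sigmaL.
have pPL : perm_eq (map g (PL n)) (PL n).
  rewrite /PL map_allpairs.
  have -> : [seq g (a, b) | a <- L n, b <- L n] = [seq (a, b) | a <- map s (L n), b <- map s (L n)].
    by rewrite allpairs_mapl allpairs_mapr.
  by apply: perm_allpairs.
rewrite /F.
have -> : count (Pr (fun y => x (s y))) (PL n) = count (Pr (fun y => x (s y))) (map g (PL n)) by rewrite (permP pPL).
rewrite count_map.
apply: (@leq_trans (count (predU (Pr x) (Rp i)) (PL n))).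
  apply: sub_count => -[a b]; rewrite /preim /g /Pr /Rp /= /s !sigmaK /=.
  case: (Z.ltb_spec (sigma i a) (sigma i b)) => // h1;
  case: (Z.eqb_spec (sigma i a) (- sigma i b)) => //= h2;
  case: (Z.eqb_spec (sigma i a) 0) => //= h7; case: (Z.eqb_spec (sigma i b) 0) => //= h8;
  case: (Z.ltb_spec (x b) (x a)) => //= h3 _.
  have h4 : a <> - b by move=> e; apply: h2; rewrite e sigmaN.
  have h9 : a <> 0 by move=> e; apply: h7; rewrite e sigma00.
  have h10 : b <> 0 by move=> e; apply: h8; rewrite e sigma00.
  case: (Z.ltb_spec a b) => h5; case: (Z.eqb_spec a (-b)) => //= _;
  case: (Z.eqb_spec a 0) => //= _; case: (Z.eqb_spec b 0) => //= _;
  case: (Z.ltb_spec b a) => //= h6; rewrite ?orbT //.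
  have : a = b by lia. by move=> e; move: h1; rewrite e; lia.
apply: (@leq_trans (count (Pr x) (PL n) + count (Rp i) (PL n))).
  by rewrite -count_predUI leq_addr.
apply: leq_add => //.
exact: (count_two (uniqPL n) (@Rsupp i)).
Qed.

Local Close Scope Z_scope.

Local Open Scope Z_scope.

Lemma weq_eval n (u v : seq 'I_n) : weq u v -> forall y, eval u y = eval v y.
Proof.
elim=> {u v}.
- move=> u v h y; case: h => u' v' a b; by rewrite !eval_cat eval_rel.
- by [].
- by move=> u v _ IH y; rewrite IH.
- by move=> u v w _ IH1 _ IH2 y; rewrite IH1 IH2.
Qed.

Lemma F_ext n (x1 x2 : Z -> Z) : (forall y, x1 y = x2 y) -> F n x1 = F n x2.
Proof. by move=> e; apply: eq_count => p; rewrite /Pr !e. Qed.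

Lemma F_id n : F n (fun y => y) = 0%nat.
Proof.
rewrite /F; elim: (PL n) => //= p s ->; rewrite /Pr.
by case: (Z.ltb_spec p.1 p.2) => h1; case: (Z.ltb_spec p.2 p.1) => h2 //=; rewrite ?andbF //; lia.
Qed.

Lemma F_eval n (w : seq 'I_n) : (2 <= n)%nat -> (F n (eval w) <= 2 * size w)%nat.
Proof.
move=> hn; elim: w => [|a w IH] /=.
  by rewrite (@F_ext n (eval [::]) (fun y => y)) // F_id.
rewrite (@F_ext n (eval (a :: w)) (fun y => eval w (sigma a y))) //.
apply: leq_trans (@step n a (eval w) hn (ltn_ord a)) _; lia.
Qed.

Lemma hws_ex n (w : seq 'I_n) k : has_word_of_size w k -> exists w', size w' = k /\ weq w w'.
Proof. by rewrite /has_word_of_size; case: excluded_middle_informative. Qed.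

Lemma coxlen_lb n (w : seq 'I_n) : (2 <= n)%nat -> (F n (eval w) <= 2 * coxlen w)%nat.
Proof.
move=> hn; rewrite /coxlen; case: ex_minnP => m /hws_ex [w' [<- hw]] _.
by rewrite (F_ext n (weq_eval hw)) F_eval.
Qed.

Lemma coxlen_ub n (w w' : seq 'I_n) : weq w w' -> (coxlen w <= size w')%nat.
Proof.
move=> hw; rewrite /coxlen; case: ex_minnP => m _ H; apply: H.
rewrite /has_word_of_size; case: excluded_middle_informative => // [[]].
by exists w'.
Qed.

Local Close Scope Z_scope.

Local Open Scope Z_scope.

Ltac nofun t := lazymatch t with
  | context [if _ then _ else _] => fail | context [sigp _ _] => fail | context [sig0 _] => fail
  | _ => idtac end.
Ltac zz := match goal with
  | |- context [Z.eqb ?u ?v] => nofun u; nofun v; destruct (Z.eqb_spec u v)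
  | |- context [Z.leb ?u ?v] => nofun u; nofun v; destruct (Z.leb_spec u v)
  | |- context [Z.ltb ?u ?v] => nofun u; nofun v; destruct (Z.ltb_spec u v)
  | |- context [sigp ?A ?y] => nofun y;
     let H := fresh in
     destruct (sigp_spec A y) as [[? H]|[[? H]|[[? H]|[[? H]|[? [? [? [? H]]]]]]]]; rewrite H; clear H
  | |- context [sig0 ?y] => nofun y;
     let H := fresh in
     destruct (sig0_spec y) as [[? H]|[[? H]|[[? H]|[[? H]|[? [? [? [? H]]]]]]]]; rewrite H; clear H
  end; cbn [andb orb negb].
Ltac zsolve := repeat (zz; try lia); lia.

Definition Pdown (m k y : Z) : Z :=
  if (m <=? y) && (y <? m + k) then y + 1 else if y =? m + k then m
  else if (- (m + k) <? y) && (y <=? - m) then y - 1 else if y =? - (m + k) then - m else y.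
Definition Pup (m k y : Z) : Z :=
  if (m <? y) && (y <=? m + k) then y - 1 else if y =? m then m + k
  else if (- (m + k) <=? y) && (y <? - m) then y + 1 else if y =? - m then - (m + k) else y.
Definition Sw (k y : Z) : Z :=
  if (y =? 1) || (y =? -1) || (y =? k + 1) || (y =? - (k + 1)) then - y else y.

Definition fs (y : Z) (ks : seq nat) : Z := foldl (fun z k => sigma k z) y ks.

Lemma sigma_pos i : (0 < i)%nat -> sigma i = sigp (Z.of_nat i).
Proof. by case: i. Qed.

Lemma fold_down m k y : (1 <= m)%nat -> fs y (rev (iota m k)) = Pdown (Z.of_nat m) (Z.of_nat k) y.
Proof.
move=> hm; elim: k y => [|k IH] y.
  rewrite /fs /= /Pdown; zsolve.
rewrite -addn1 iotaD rev_cat /= /fs /= -/(fs _ _) IH sigma_pos; last lia.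
rewrite /Pdown; zsolve.
Qed.

Lemma fold_up m k y : (1 <= m)%nat -> fs y (iota m k) = Pup (Z.of_nat m) (Z.of_nat k) y.
Proof.
elim: k m y => [|k IH] m y hm.
  rewrite /fs /= /Pup; zsolve.
rewrite /= /fs /= -/(fs _ _) IH ?sigma_pos; try lia.
rewrite /Pup; zsolve.
Qed.

Lemma fold_w k y : (1 <= k)%nat -> fs y (rev (iota 1 k) ++ [:: 0%nat] ++ iota 2 k.-1) = Sw (Z.of_nat k) y.
Proof.
move=> hk; rewrite /fs !foldl_cat -!/(fs _ _) fold_down // /= fold_up //.
rewrite /Pup /Pdown /Sw; zsolve.
Qed.

Local Close Scope Z_scope.

Lemma word_cat n a b : word_of n (a ++ b) = word_of n a ++ word_of n b.
Proof. by rewrite /word_of map_cat flatten_cat. Qed.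

Lemma gen_lt n k (h : (k < n)%nat) : gen n k = [:: Ordinal h].
Proof. by rewrite /gen insubT. Qed.

Lemma eval_word n ks y : all (fun k => k < n)%nat ks -> eval (word_of n ks) y = fs y ks.
Proof.
elim: ks y => [|k ks IH] y //= /andP [hk hks].
rewrite -[word_of n (k :: ks)]/(gen n k ++ word_of n ks) (gen_lt hk) eval_cat IH //.
Qed.

Lemma size_word n ks : all (fun k => k < n)%nat ks -> size (word_of n ks) = size ks.
Proof.
elim: ks => [|k ks IH] //= /andP [hk hks].
by rewrite -[word_of n (k :: ks)]/(gen n k ++ word_of n ks) (gen_lt hk) /= IH.
Qed.

Lemma weq_refl n (u : seq 'I_n) : weq u u.
Proof. exact: rst_refl. Qed.
Lemma weq_sym n (u v : seq 'I_n) : weq u v -> weq v u.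
Proof. exact: rst_sym. Qed.
Lemma weq_trans n (u v w : seq 'I_n) : weq u v -> weq v w -> weq u w.
Proof. exact: rst_trans. Qed.

Lemma weq_ctx n (p q u v : seq 'I_n) : weq u v -> weq (p ++ u ++ q) (p ++ v ++ q).
Proof.
elim=> {u v}.
- move=> u v h; case: h => u' v' a b; apply: rst_step.
  have -> : p ++ (u' ++ v') ++ q = (p ++ u') ++ (v' ++ q) by rewrite !catA.
  have -> : p ++ (u' ++ relator a b ++ v') ++ q = (p ++ u') ++ relator a b ++ (v' ++ q) by rewrite !catA.
  exact: RelIns.
- move=> u; exact: rst_refl.
- by move=> u v _ IH; apply: rst_sym.
- by move=> u v w _ IH1 _ IH2; apply: rst_trans IH2.
Qed.

Lemma weq_cancel n (u v : seq 'I_n) (a : 'I_n) : weq (u ++ [:: a; a] ++ v) (u ++ v).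
Proof.
apply: rst_sym; apply: rst_step.
have -> : [:: a; a] = relator a a by rewrite /relator /coxm eqxx.
exact: RelIns.
Qed.

Lemma iota_S m k : iota m k.+1 = iota m k ++ [:: (m + k)%nat].
Proof. by rewrite -addn1 iotaD. Qed.

Lemma rev_iota_S m k : rev (iota m k.+1) = (m + k)%nat :: rev (iota m k).
Proof. by rewrite -addn1 iotaD rev_cat. Qed.

Lemma w_word_S n j : (2 <= j)%nat -> (j < n)%nat ->
  w_word n j = gen n j ++ w_word n j.-1 ++ gen n j.
Proof.
move=> h2 hn; rewrite /w_word.
have e1 : rev (iota 1 j) = j :: rev (iota 1 j.-1).
  by rewrite -{1}(prednK (ltnW h2)) rev_iota_S add1n prednK // ltnW.
have e2 : iota 2 j.-1 = iota 2 j.-2 ++ [:: j].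
  have -> : j.-1 = (j.-2).+1 by lia.
  by rewrite iota_S; congr (_ ++ [:: _]); lia.
rewrite e1 e2.
have -> : (j :: rev (iota 1 j.-1)) ++ [:: 0%nat] ++ (iota 2 j.-2 ++ [:: j]) =
   [:: j] ++ (rev (iota 1 j.-1) ++ [:: 0%nat] ++ iota 2 j.-2) ++ [:: j] by rewrite /= -!catA.
rewrite !word_cat; congr (_ ++ _ ++ _); by rewrite /word_of /= cats0.
Qed.

Lemma pi_word_S n j r : (r.+1 < j)%nat ->
  pi_word n j r.+1 = gen n j ++ pi_word n j.-1 r.
Proof.
move=> h; rewrite /pi_word rev_iota_S.
have -> : (j - r.+1 + r.+1 = j)%nat by lia.
by have -> : (j.-1 - r = j - r.+1)%nat by lia.
Qed.

Lemma pi_word_0 n j : pi_word n j 0 = gen n j.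
Proof. by rewrite /pi_word subn0 /= /word_of /= cats0. Qed.

Lemma main_weq n r : forall j, (2 <= j)%nat -> (j < n)%nat -> (r <= j - 2)%nat ->
  weq (w_word n j ++ pi_word n j r) (pi_word n j r ++ w_word n (j - r - 1)).
Proof.
elim: r => [|r IH] j h2 hn hr.
- rewrite pi_word_0 w_word_S // (gen_lt hn) subn0 subn1 -!catA.
  have := @weq_cancel n ([:: Ordinal hn] ++ w_word n j.-1) [::] (Ordinal hn).
  by rewrite !cats0 /=.
- rewrite pi_word_S; last lia.
  rewrite w_word_S // (gen_lt hn).
  apply: weq_trans.
    have := @weq_cancel n ([:: Ordinal hn] ++ w_word n j.-1) (pi_word n j.-1 r) (Ordinal hn).
    rewrite -!catA /=; exact.
  have := @weq_ctx n [:: Ordinal hn] [::] _ _ (IH j.-1 ltac:(lia) ltac:(lia) ltac:(lia)).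
  rewrite !cats0 /=.
  by have -> : (j.-1 - r - 1 = j - r.+1 - 1)%nat by lia.
Qed.

Ltac zsolve2 := repeat (zz; try lia; try done); try done; lia.

Lemma lb_count n x (T : seq (Z * Z)) : uniq T ->
  (forall p, p \in T -> (p \in PL n) && Pr x p) -> (size T <= F n x)%nat.
Proof.
move=> uT H; rewrite /F -size_filter; apply: uniq_leq_size => // p /H.
by rewrite mem_filter andbC.
Qed.

Lemma disj_maps (f g : nat -> Z * Z) s t : (forall a b, a \in s -> b \in t -> f a <> g b) ->
  ~~ has (mem (map f s)) (map g t).
Proof.
move=> H; apply/hasPn => p /mapP [b hb ->]; apply/negP => /mapP [a ha e].
by apply: (H a b ha hb); rewrite e.
Qed.

Ltac inj_tac := let a := fresh in let b := fresh in move=> a b; case; lia.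

Lemma LB_pi n j r : (2 <= n)%nat -> (2 <= j)%nat -> (j <= n - 1)%nat -> (r <= j - 2)%nat ->
  (2 * r.+1 <= F n (Pdown (Z.of_nat (j - r)) (Z.of_nat r.+1)))%nat.
Proof.
move=> hn hj hjn hr.
set J1 := (Z.of_nat j + 1)%Z.
pose T := [seq (Z.of_nat a, J1) | a <- iota (j - r) r.+1] ++ [seq (- J1, - Z.of_nat a)%Z | a <- iota (j - r) r.+1].
have -> : (2 * r.+1 = size T)%nat by rewrite /T size_cat !size_map size_iota; lia.
apply: lb_count.
  rewrite /T cat_uniq !map_inj_uniq ?iota_uniq ?andbT; try inj_tac.
  apply: disj_maps => a b; rewrite !mem_iota => ha hb; case; lia.
move=> p; rewrite /T mem_cat => /orP [] /mapP [a]; rewrite mem_iota => ha ->;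
  (apply/andP; split; [rewrite memPL; apply/andP; split; apply/memL; rewrite /J1 /=; lia|]);
  rewrite /Pr /Pdown /J1 /=; zsolve2.
Qed.

Lemma LB_big n j r : (2 <= n)%nat -> (2 <= j)%nat -> (j <= n - 1)%nat -> (r <= j - 2)%nat ->
  (2 * (r.+1 + 2 * (j - r - 1)) <= F n (fun y => Pdown (Z.of_nat (j - r)) (Z.of_nat r.+1) (Sw (Z.of_nat j) y)))%nat.
Proof.
move=> hn hj hjn hr.
set J1 := (Z.of_nat j + 1)%Z.
pose T := [seq (Z.of_nat a, J1) | a <- iota 1 j] ++ [seq (- J1, - Z.of_nat a)%Z | a <- iota 1 j]
  ++ [seq (- J1, Z.of_nat a)%Z | a <- iota 1 (j - r - 1)] ++ [seq (- Z.of_nat a, J1)%Z | a <- iota 1 (j - r - 1)].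
have -> : (2 * (r.+1 + 2 * (j - r - 1)) = size T)%nat by rewrite /T !size_cat !size_map !size_iota; lia.
apply: lb_count.
  rewrite /T !cat_uniq !has_cat !negb_or !map_inj_uniq ?iota_uniq ?andbT; try inj_tac.
  by repeat (apply/andP; split) => //; apply: disj_maps => a b; rewrite !mem_iota => ha hb; case; lia.
move=> p; rewrite /T !mem_cat => /orP [|/orP [|/orP []]] /mapP [a]; rewrite mem_iota => ha ->;
  (apply/andP; split; [rewrite memPL; apply/andP; split; apply/memL; rewrite /J1 /=; lia|]);
  rewrite /Pr /Pdown /Sw /J1 /=; zsolve2.
Qed.


Theorem mainTheorem13 (n j r : nat) :
  2 <= n -> 2 <= j -> j <= n - 1 -> r <= j - 2 ->
  weq (w_word n j ++ pi_word n j r) (pi_word n j r ++ w_word n (j - r - 1)) /\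
  coxlen (w_word n j ++ pi_word n j r) = coxlen (pi_word n j r) + 2 * (j - r - 1).
Proof.
move=> hn hj hjn hr.
have hjn' : j < n by lia.
have hW := main_weq hj hjn' hr.
split => //.
have allW : forall k, k < n -> all (fun k => k < n) (rev (iota 1 k) ++ [:: 0] ++ iota 2 k.-1).
  move=> k hk; apply/allP => i; rewrite !mem_cat mem_rev !mem_iota inE; lia.
have allP' : all (fun k => k < n) (rev (iota (j - r) r.+1)).
  apply/allP => i; rewrite mem_rev mem_iota; lia.
have evalA : forall y, eval (w_word n j ++ pi_word n j r) y =
    Pdown (Z.of_nat (j - r)) (Z.of_nat r.+1) (Sw (Z.of_nat j) y).
  move=> y; rewrite eval_cat /w_word /pi_word !eval_word // ?allW // fold_w ?fold_down //; lia.
have evalB : forall y, eval (pi_word n j r) y = Pdown (Z.of_nat (j - r)) (Z.of_nat r.+1) y.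
  move=> y; rewrite /pi_word !eval_word // ?fold_down //; lia.
have sizeB : size (pi_word n j r) = r.+1 by rewrite /pi_word size_word // size_rev size_iota.
have sizeW : size (w_word n (j - r - 1)) = 2 * (j - r - 1).
  rewrite /w_word size_word; last by apply: allW; lia.
  rewrite !size_cat size_rev !size_iota /=; lia.
have u1 := coxlen_ub hW.
rewrite size_cat sizeB sizeW in u1.
have u2 : coxlen (pi_word n j r) <= r.+1 by rewrite -sizeB; apply: coxlen_ub; apply: weq_refl.
have l1 := coxlen_lb (w_word n j ++ pi_word n j r) hn.
rewrite (F_ext n evalA) in l1.
have l1' := LB_big hn hj hjn hr.
have l2 := coxlen_lb (pi_word n j r) hn.
rewrite (F_ext n evalB) in l2.
have l2' := LB_pi hn hj hjn hr.
lia.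
Qed.
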